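(* Let $\mathcal{G}$ be a pdCG and let $\mathcal{A}$ be a set of pdCGs such that (i) the graphs in $\mathcal{A}$ are pairwise $\preceq_{t}$-incomparable and (ii) every $\mathcal{F}\in \mathcal{A}$ is covered by $\mathcal{G}$ in the model inclusion order, so that $\mathcal{P}(\mathcal{F})$ is a neighbouring submodel of $\mathcal{P}(\mathcal{G})$. Then, for every $\mathcal{H}\in\mathcal{A}$ the set $$\mathcal{B}=\{\mathcal{F} \wedge_{s} \mathcal{H} \mid \mathcal{F} \in \mathcal{A} \setminus \{\mathcal{H}\}\}=\{\mathcal{F} \wedge_{t} \mathcal{H} \mid \mathcal{F} \in \mathcal{A} \setminus \{\mathcal{H}\}\}$$ has the same properties as $\mathcal{A}$, that is, (i) the graphs in $\mathcal{B}$ are pairwise $\preceq_{t}$-incomparable and (ii) every $\mathcal{F}\in \mathcal{B}$ is covered by $\mathcal{H}$ in the model inclusion order, so that $\mathcal{P}(\mathcal{F})$ is a neighbouring submodel of $\mathcal{P}(\mathcal{H})$.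
   Context: Let $V=\{1,\dots,p\}$ and let $\tau$ be a twin-pairing function on $V$, i.e. $\tau(i)\in V$ with $\tau(\tau(i))=i$ and $\tau(i)\neq i$; it is extended to edges by $\tau(i,j)=(\tau(i),\tau(j))$ (endpoints reordered so the smaller comes first) and to sets elementwise. Fix a partition $(L,R)$ of $V$ with $\tau(L)=R$, numbered so that $L=\{1,\dots,q\}$, $R=\{q+1,\dots,p\}$. Let $F_V=\{(i,j): i,j\in V, i<j\}$, $F_L=\{(i,j)\in F_V: i<\tau(j)\}$, $F_R=\{(i,j)\in F_V: i>\tau(j)\}$. A coloured graph $\mathcal G=(\mathcal V,\mathcal E)$ consists of a partition $\mathcal V$ of $V$ into vertex colour classes and a partition $\mathcal E$ of an edge set $E\subseteq F_V$ into edge colour classes. It is a coloured graph for paired data (pdCG) if every colour class is either atomic (a single element) or twin-pairing (of the form $\{i,\tau(i)\}$ or $\{(i,j),\tau(i,j)\}$ with $(i,j)\neq\tau(i,j)$). The associated RCON model for paired data $\mathcal{P}(\mathcal G)$ is the family of Gaussian distributions whose concentration matrix has zero entries for missing edges and equal entries for vertices or edges in the same colour class; $\mathcal{P}$ denotes the family of all pdCGs on $V$. Every pdCG is equivalently represented by the quadruplet $(V,E,\mathbb L,\mathbb E)$ where $E$ is the union of the edge colour classes, $E_L=E\cap F_L$, $E_R=E\cap F_R$, $\mathbb L=\{i\in L:\{i\}\in\mathcal V\}$ and $\mathbb E=\{(i,j)\in E_L\cap\tau(E_R): \{(i,j)\}\in\mathcal E\}$. The model inclusion order is $\mathcal H\preceq_s\mathcal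 G$ iff $\mathcal P(\mathcal H)\subseteq\mathcal P(\mathcal G)$ (iff the edge set of $\mathcal H$ is contained in that of $\mathcal G$ and every vertex, resp. edge, colour class of $\mathcal H$ is a union of vertex, resp. edge, colour classes of $\mathcal G$); $\mathcal H$ is covered by $\mathcal G$ in this order if $\mathcal H\prec_s\mathcal G$ and no $\mathcal F\in\mathcal P$ satisfies $\mathcal H\prec_s\mathcal F\prec_s\mathcal G$; $\wedge_s$ denotes the meet in the lattice $\langle\mathcal P,\preceq_s\rangle$. The twin order is $\mathcal H\preceq_t\mathcal G$ iff $E_{\mathcal H}\subseteq E_{\mathcal G}$, $\mathbb L_{\mathcal H}\subseteq\mathbb L_{\mathcal G}$ and $\mathbb E_{\mathcal H}\subseteq\mathbb E_{\mathcal G}$; $\langle\mathcal P,\preceq_t\rangle$ is a lattice whose meet is $\mathcal G\wedge_t\mathcal H=(V,E_{\mathcal G}\cap E_{\mathcal H},\mathbb L_{\mathcal G}\cap\mathbb L_{\mathcal H},\mathbb E_{\mathcal G}\cap\mathbb E_{\mathcal H})$. *)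

(* Defs.v *)
(* Vertices V = {1..p} are modelled 0-based as 'I_p;
   L = {i | i < q}, R = complement of L. *)
From mathcomp Require Import all_boot.
Set Implicit Arguments. Unset Strict Implicit. Unset Printing Implicit Defensive.

Definition union_of (T : finType) (P : {set {set T}}) (C : {set T}) : Prop :=
  exists S : {set {set T}}, S \subset P /\ C = cover S.

Section PairedData.
Variables (p q : nat) (tau : 'I_p -> 'I_p).

Definition Lset : {set 'I_p} := [set i : 'I_p | i < q].
Definition Rset : {set 'I_p} := ~: Lset.

Definition edge := ('I_p * 'I_p)%type.
Definition FV : {set edge} := [set e : edge | e.1 < e.2].
Definition tau_e (e : edge) : edge :=
  if tau e.1 < tau e.2 then (tau e.1, tau e.2) else (tau e.2, tau e.1).
Definition FL : {set edge} := [set e in FV | e.1 < tau e.2].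
Definition FR : {set edge} := [set e in FV | tau e.2 < e.1].

Definition CG := ({set {set 'I_p}} * {set {set edge}})%type.
Definition vcol (G : CG) := G.1.
Definition ecol (G : CG) := G.2.
Definition Eset (G : CG) : {set edge} := cover (ecol G).

Definition is_CG (G : CG) : bool :=
  [&& partition (vcol G) [set: 'I_p], partition (ecol G) (Eset G)
    & Eset G \subset FV].

Definition is_pdCG (G : CG) : bool :=
  [&& is_CG G,
      [forall C in vcol G, exists i, (C == [set i]) || (C == [set i; tau i])]
    & [forall D in ecol G, exists e,
          (D == [set e]) || ((D == [set e; tau_e e]) && (e != tau_e e))]].

Definition le_s (H G : CG) : Prop :=
  [/\ Eset H \subset Eset G,
      (forall C, C \in vcol H -> union_of (vcol G) C)
    & (forall D, D \in ecol H -> union_of (ecol G) D)].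
Definition lt_s (H G : CG) : Prop := le_s H G /\ H <> G.
Definition covered (H G : CG) : Prop :=
  lt_s H G /\ ~ (exists F, is_pdCG F /\ lt_s H F /\ lt_s F G).

Definition is_meet_s (F H M : CG) : Prop :=
  [/\ is_pdCG M, le_s M F, le_s M H
    & forall K, is_pdCG K -> le_s K F -> le_s K H -> le_s K M].

Definition Lbb (G : CG) : {set 'I_p} := [set i in Lset | [set i] \in vcol G].
Definition Ebb (G : CG) : {set edge} :=
  [set e in (Eset G :&: FL) :&: (tau_e @: (Eset G :&: FR)) | [set e] \in ecol G].
Definition le_t (H G : CG) : Prop :=
  [/\ Eset H \subset Eset G, Lbb H \subset Lbb G & Ebb H \subset Ebb G].
Definition is_meet_t (F H M : CG) : Prop :=
  [/\ is_pdCG M, Eset M = Eset F :&: Eset H, Lbb M = Lbb F :&: Lbb H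
    & Ebb M = Ebb F :&: Ebb H].

Definition t_incomparable (A : CG -> Prop) : Prop :=
  forall F1 F2, A F1 -> A F2 -> F1 <> F2 -> ~ le_t F1 F2.
Definition meets_s (A : CG -> Prop) (H : CG) : CG -> Prop :=
  fun M => exists F, [/\ A F, F <> H & is_meet_s F H M].
Definition meets_t (A : CG -> Prop) (H : CG) : CG -> Prop :=
  fun M => exists F, [/\ A F, F <> H & is_meet_t F H M].
End PairedData.

(* Main.v *)
Require Import Defs.
From mathcomp Require Import all_boot zify.
Set Implicit Arguments. Unset Strict Implicit. Unset Printing Implicit Defensive.

Section Infra.
Variables (p q : nat) (tau : 'I_p -> 'I_p).
Hypothesis tau_invol : involutive tau.
Hypothesis tau_nofix : forall i, tau i != i.
Hypothesis tau_LR : tau @: Lset p q = Rset p q.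

Local Notation te := (tau_e tau).
Local Notation U := ('I_p + (edge p + edge p))%type.
Local Notation uV i := (inl i : U).
Local Notation uE e := (inr (inl e) : U).
Local Notation uA e := (inr (inr e) : U).

Lemma te_FV e : e \in FV p -> te e \in FV p.
Proof.
case: e => a b; rewrite /tau_e !inE /= => ab.
have nab : tau a != tau b.
  by apply: contraTneq ab => /(can_inj tau_invol) ->; rewrite ltnn.
case: (ltnP (tau a) (tau b)) => //= h; rewrite ltn_neqAle h andbT.
by apply: contra nab => /eqP/val_inj ->.
Qed.

Lemma te_invol e : e \in FV p -> te (te e) = e.
Proof.
case: e => a b; rewrite inE /= => ab; rewrite /tau_e /=.
case: (ltnP (tau a) (tau b)) => h /=; rewrite !tau_invol; first by rewrite ab.
by rewrite ltnNge (ltnW ab).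
Qed.

Lemma blocks_eq (T : finType) (P : {set {set T}}) B1 B2 x :
  trivIset P -> B1 \in P -> B2 \in P -> x \in B1 -> x \in B2 -> B1 = B2.
Proof.
by move=> tI P1 P2 x1 x2; rewrite -(def_pblock tI P1 x1) -(def_pblock tI P2 x2).
Qed.

Lemma union_of1 (T : finType) (P : {set {set T}}) x :
  union_of P [set x] -> [set x] \in P.
Proof.
case=> S [/subsetP sSP eqC].
have : x \in cover S by rewrite -eqC set11.
case/bigcupP => B BS xB.
suff -> : [set x] = B by apply: sSP.
apply/eqP; rewrite eqEsubset sub1set xB /=.
apply/subsetP => y yB; rewrite eqC.
by apply/bigcupP; exists B.
Qed.

Lemma sing_cover (T : finType) (P : {set {set T}}) x : [set x] \in P -> x \in cover P.
Proof. by move=> h; apply/bigcupP; exists [set x]; rewrite ?set11. Qed.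

Lemma in_cover (T : finType) (P : {set {set T}}) B x : B \in P -> x \in B -> x \in cover P.
Proof. by move=> h1 h2; apply/bigcupP; exists B. Qed.

Lemma cover2 (T : finType) (A B : {set T}) : cover [set A; B] = A :|: B.
Proof. by rewrite /cover bigcup_setU !big_set1. Qed.

Lemma pdCG_parts X : is_pdCG tau X ->
  [/\ partition (vcol X) [set: 'I_p], partition (ecol X) (Eset X),
      Eset X \subset FV p,
      (forall C, C \in vcol X -> exists i, (C = [set i]) \/ (C = [set i; tau i]))
    & (forall D, D \in ecol X -> exists e, (D = [set e]) \/ (D = [set e; te e] /\ e != te e))].
Proof.
case/and3P => /and3P[Pv Pe sub] /forallP Hv /forallP He; split => //.
- move=> C CP; move: (Hv C); rewrite CP /= => /existsP[i /orP[/eqP->|/eqP->]].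
    by exists i; left.
  by exists i; right.
- move=> D DP; move: (He D); rewrite DP /= => /existsP[e /orP[/eqP->|/andP[/eqP-> ne]]].
    by exists e; left.
  by exists e; right.
Qed.

Section PD.
Variable X : CG p.
Hypothesis HX : is_pdCG tau X.

Lemma vblock i : [set i] \notin vcol X -> [set i; tau i] \in vcol X.
Proof.
move=> ni; have [Pv _ _ Cv _] := pdCG_parts HX.
case/and3P: Pv => /eqP cv tI _.
have ic : i \in cover (vcol X) by rewrite cv inE.
have Bm := pblock_mem ic.
have iB : i \in pblock (vcol X) i by rewrite mem_pblock.
case: (Cv _ Bm) => j [E|E]; rewrite E in Bm iB.
  by move: iB; rewrite inE => /eqP ij; subst j; rewrite Bm in ni.
move: iB; rewrite !inE => /orP[/eqP->//|/eqP ij].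
have ji : j = tau i by rewrite ij tau_invol.
by move: Bm; rewrite ji tau_invol setUC.
Qed.

Lemma vsing_tau i : [set i] \in vcol X -> [set tau i] \in vcol X.
Proof.
move=> h; apply/negP => /negP/vblock; rewrite tau_invol => h2.
have [Pv _ _ _ _] := pdCG_parts HX; case/and3P: Pv => _ tI _.
have E : [set i] = [set tau i; i].
  by apply: (blocks_eq tI h h2 (set11 i)); rewrite !inE eqxx orbT.
have : tau i \in [set i] by rewrite E !inE eqxx.
by rewrite inE (negbTE (tau_nofix i)).
Qed.

Lemma vnotsing i : [set i; tau i] \in vcol X -> [set i] \notin vcol X.
Proof.
move=> h; apply/negP => h2.
have [Pv _ _ _ _] := pdCG_parts HX; case/and3P: Pv => _ tI _.
have E : [set i; tau i] = [set i].
  by apply: (blocks_eq tI h h2 (x := i)); rewrite !inE eqxx.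
have : tau i \in [set i] by rewrite -E !inE eqxx orbT.
by rewrite inE (negbTE (tau_nofix i)).
Qed.

Lemma Eset_FV e : e \in Eset X -> e \in FV p.
Proof. by have [_ _ sub _ _] := pdCG_parts HX; move/(subsetP sub). Qed.

Lemma sing_Eset e : [set e] \in ecol X -> e \in Eset X.
Proof. exact: sing_cover. Qed.

Lemma eblock e : e \in Eset X -> [set e] \notin ecol X ->
  [set e; te e] \in ecol X /\ te e != e.
Proof.
move=> eE ne; have [_ Pe sub _ Ce] := pdCG_parts HX.
case/and3P: Pe => /eqP ce tI _.
have ec : e \in cover (ecol X) by rewrite ce.
have Bm := pblock_mem ec.
have iB : e \in pblock (ecol X) e by rewrite mem_pblock.
case: (Ce _ Bm) => f [E|[E nf]]; rewrite E in Bm iB.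
  by move: iB; rewrite inE => /eqP ij; subst f; rewrite Bm in ne.
move: iB; rewrite !inE => /orP[/eqP ef|/eqP ef].
  by subst f; split => //; rewrite eq_sym.
have fF : f \in FV p.
  by apply: (subsetP sub); rewrite -ce; apply: (in_cover Bm); rewrite !inE eqxx.
have tef : te e = f by rewrite ef te_invol.
split; first by rewrite tef ef setUC.
by rewrite tef ef.
Qed.

Lemma esing_tau e : [set e] \in ecol X -> te e \in Eset X -> [set te e] \in ecol X.
Proof.
move=> h tE; apply/negP => /negP nt.
have eF := Eset_FV (sing_Eset h).
have [h2 ne] := eblock tE nt; rewrite te_invol // in h2 ne.
have [_ Pe _ _ _] := pdCG_parts HX; case/and3P: Pe => _ tI _.
have E : [set e] = [set te e; e].
  by apply: (blocks_eq tI h h2 (x := e)); rewrite !inE eqxx ?orbT.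
have : te e \in [set e] by rewrite E !inE eqxx.
by rewrite inE eq_sym (negbTE ne).
Qed.

Lemma enotsing e : [set e; te e] \in ecol X -> te e != e -> [set e] \notin ecol X.
Proof.
move=> h ne; apply/negP => h2.
have [_ Pe _ _ _] := pdCG_parts HX; case/and3P: Pe => _ tI _.
have E : [set e; te e] = [set e].
  by apply: (blocks_eq tI h h2 (x := e)); rewrite !inE eqxx.
have : te e \in [set e] by rewrite -E !inE eqxx orbT.
by rewrite inE (negbTE ne).
Qed.

End PD.


Definition mem3 (X : CG p) (u : U) : bool :=
  match u with
  | inl i => [set i] \in vcol X
  | inr (inl e) => e \in Eset X
  | inr (inr e) => [set e] \in ecol X
  end.
Definition SS (X : CG p) : {set U} := [set u | mem3 X u].

Lemma SSV X i : (uV i \in SS X) = ([set i] \in vcol X). Proof. by rewrite inE. Qed.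
Lemma SSE X e : (uE e \in SS X) = (e \in Eset X). Proof. by rewrite inE. Qed.
Lemma SSA X e : (uA e \in SS X) = ([set e] \in ecol X). Proof. by rewrite inE. Qed.

Definition validS (S : {set U}) : Prop :=
  [/\ forall i, (uV i \in S) = (uV (tau i) \in S),
      forall e, uA e \in S -> uE e \in S,
      forall e, uE e \in S -> uA e \notin S ->
         [/\ uE (te e) \in S, uA (te e) \notin S & te e != e],
      forall e, uE e \in S -> uE (te e) \in S -> uA e \in S -> uA (te e) \in S
    & forall e, uE e \in S -> e \in FV p].

Lemma pdCG_valid X : is_pdCG tau X -> validS (SS X).
Proof.
move=> HX; split.
- move=> i; rewrite !SSV; apply/idP/idP; first exact: vsing_tau.
  by move/(vsing_tau HX); rewrite tau_invol.
- by move=> e; rewrite SSA SSE; apply: sing_Eset.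
- move=> e; rewrite !SSE !SSA => eE nA.
  have [h ne] := eblock HX eE nA.
  have tE : te e \in Eset X.
    have [_ Pe _ _ _] := pdCG_parts HX; case/and3P: Pe => /eqP <- _ _.
    by apply: (in_cover h); rewrite !inE eqxx orbT.
  split => //; apply/negP => h2.
  have [_ Pe _ _ _] := pdCG_parts HX; case/and3P: Pe => _ tI _.
  have E : [set te e] = [set e; te e].
    by apply: (blocks_eq tI h2 h (x := te e)); rewrite !inE eqxx ?orbT.
  have : e \in [set te e] by rewrite E !inE eqxx.
  by rewrite inE eq_sym (negbTE ne).
- move=> e; rewrite !SSE !SSA => _ tE h; exact: esing_tau.
- by move=> e; rewrite SSE; apply: Eset_FV.
Qed.

Lemma le_sS X Y : is_pdCG tau X -> is_pdCG tau Y -> le_s X Y <-> SS X \subset SS Y.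
Proof.
move=> HX HY; split.
  case=> sE Hv He; apply/subsetP => -[i|[e|e]]; rewrite !inE /=.
  - by move/Hv/union_of1.
  - by move/(subsetP sE).
  - by move/He/union_of1.
move/subsetP => sub.
have [_ _ _ Cv Ce] := pdCG_parts HX.
have [_ PeY _ _ _] := pdCG_parts HY.
case/and3P: PeY => /eqP ceY _ _.
have sE : Eset X \subset Eset Y.
  by apply/subsetP => e; have := sub (uE e); rewrite !SSE.
split => //.
- move=> C CP; case: (Cv C CP) => i [E|E]; subst C.
    exists [set [set i]]; split; last by rewrite cover1.
    by rewrite sub1set -SSV; apply: sub; rewrite SSV.
  case: (boolP ([set i] \in vcol Y)) => iY.
    exists [set [set i]; [set tau i]]; split; last by rewrite cover2.
    apply/subsetP => B; rewrite !inE => /orP[/eqP->|/eqP->] //.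
    exact: vsing_tau.
  exists [set [set i; tau i]]; split; last by rewrite cover1.
  by rewrite sub1set; apply: vblock.
- move=> D DP; case: (Ce D DP) => e [E|[E ne]]; subst D.
    exists [set [set e]]; split; last by rewrite cover1.
    by rewrite sub1set -SSA; apply: sub; rewrite SSA.
  have [_ PeX _ _ _] := pdCG_parts HX; case/and3P: PeX => /eqP ceX _ _.
  have eX : e \in Eset X by rewrite -ceX; apply: (in_cover DP); rewrite !inE eqxx.
  have tX : te e \in Eset X by rewrite -ceX; apply: (in_cover DP); rewrite !inE eqxx orbT.
  have eY := subsetP sE _ eX; have tY := subsetP sE _ tX.
  case: (boolP ([set e] \in ecol Y)) => iY.
    exists [set [set e]; [set te e]]; split; last by rewrite cover2.
    apply/subsetP => B; rewrite !inE => /orP[/eqP->|/eqP->] //.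
    exact: esing_tau.
  exists [set [set e; te e]]; split; last by rewrite cover1.
  by rewrite sub1set; have [] := eblock HY eY iY.
Qed.

Lemma SS_sub_col X Y : is_pdCG tau X -> is_pdCG tau Y -> SS X = SS Y ->
  vcol X \subset vcol Y /\ ecol X \subset ecol Y.
Proof.
move=> HX HY E.
have [_ _ _ Cv Ce] := pdCG_parts HX.
split; apply/subsetP.
- move=> C CP; case: (Cv C CP) => i [E1|E1]; subst C.
    by rewrite -SSV -E SSV.
  apply: vblock => //; rewrite -SSV -E SSV; exact: vnotsing.
- move=> D DP; case: (Ce D DP) => e [E1|[E1 ne]]; subst D.
    by rewrite -SSA -E SSA.
  have [_ PeX _ _ _] := pdCG_parts HX; case/and3P: PeX => /eqP ceX _ _.
  have eX : e \in Eset X by rewrite -ceX; apply: (in_cover DP); rewrite !inE eqxx.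
  have [] // := eblock HY (e := e).
    by rewrite -SSE -E SSE.
  rewrite -SSA -E SSA; apply: enotsing => //; by rewrite eq_sym.
Qed.

Lemma SS_inj X Y : is_pdCG tau X -> is_pdCG tau Y -> SS X = SS Y -> X = Y.
Proof.
move=> HX HY E.
have [s1 s2] := SS_sub_col HX HY E.
have [s3 s4] := SS_sub_col HY HX (esym E).
move: s1 s2 s3 s4; case: X {HX E} => vx ex; case: Y {HY} => vy ey /= s1 s2 s3 s4.
by congr pair; apply/eqP; rewrite eqEsubset ?s1 ?s2 ?s3 ?s4.
Qed.


Lemma build S : validS S -> exists X, is_pdCG tau X /\ SS X = S.
Proof.
case=> V1 V2 V3 V4 V5.
pose vr := fun i j : 'I_p => (j == i) || ((uV i \notin S) && (j == tau i)).
pose ED := [set e | uE e \in S].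
pose er := fun e f : edge p => (f == e) || ((uA e \notin S) && (f == te e)).
have vrE : {in [set: 'I_p] & &, equivalence_rel vr}.
  move=> x y z _ _ _; split; first by rewrite /vr eqxx.
  rewrite /vr => /orP[/eqP->//|/andP[xS /eqP->]].
  have txS : uV (tau x) \notin S by rewrite -V1.
  by rewrite xS txS tau_invol /= orbC.
have erE : {in ED & &, equivalence_rel er}.
  move=> x y z xD _ _; split; first by rewrite /er eqxx.
  rewrite /er => /orP[/eqP->//|/andP[xS /eqP->]].
  have xD' : uE x \in S by rewrite inE in xD.
  have [_ txS _] := V3 _ xD' xS.
  by rewrite xS txS (te_invol (V5 _ xD')) /= orbC.
pose X : CG p := (equivalence_partition vr [set: 'I_p], equivalence_partition er ED).
have Pv := equivalence_partitionP vrE.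
have Pe := equivalence_partitionP erE.
have EX : Eset X = ED by case/and3P: Pe => /eqP.
have vS : forall i, ([set i] \in vcol X) = (uV i \in S).
  move=> i; apply/idP/idP.
    move=> Pi; apply: contraT => iS.
    case/and3P: Pv => _ tI _.
    have := pblock_equivalence_partition vrE (in_setT i) (in_setT (tau i)).
    rewrite (def_pblock tI Pi (set11 i)) /vr iS eqxx orbT inE => h.
    by move: (tau_nofix i); rewrite h.
  move=> iS; have -> : [set i] = [set y in [set: 'I_p] | vr i y].
    by apply/setP => y; rewrite !inE /vr iS /= orbF.
  by apply/imsetP; exists i.
have eS : forall e, ([set e] \in ecol X) = (uA e \in S).
  move=> e; apply/idP/idP.
    move=> Pi; apply: contraT => eA.
    have eD : e \in ED by rewrite -EX; apply: sing_cover.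
    have eE : uE e \in S by rewrite inE in eD.
    have [tE _ ne] := V3 _ eE eA.
    have tD : te e \in ED by rewrite inE.
    case/and3P: Pe => _ tI _.
    have := pblock_equivalence_partition erE eD tD.
    rewrite (def_pblock tI Pi (set11 e)) /er eA eqxx orbT inE => /eqP h.
    by rewrite h eqxx in ne.
  move=> eA; have eE := V2 _ eA.
  have -> : [set e] = [set f in ED | er e f].
    apply/setP => f; rewrite !inE /er eA /= orbF.
    by case: eqP => [->|]; rewrite ?andbF ?eE.
  by apply/imsetP; exists e; rewrite // inE.
exists X; split; last first.
  by apply/setP => -[i|[e|e]]; rewrite inE /= ?vS ?eS // EX inE.
apply/and3P; split.
- rewrite /is_CG /= EX Pv Pe /=; apply/subsetP => e; rewrite inE; exact: V5.
- apply/forallP => C; apply/implyP => /imsetP[x _ ->]; apply/existsP; exists x.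
  case: (boolP (uV x \in S)) => xS.
    by apply/orP; left; apply/eqP/setP => y; rewrite !inE /vr xS /= orbF.
  by apply/orP; right; apply/eqP/setP => y; rewrite !inE /vr xS.
- apply/forallP => D; apply/implyP => /imsetP[x xD ->]; apply/existsP; exists x.
  have xE : uE x \in S by rewrite inE in xD.
  case: (boolP (uA x \in S)) => xS.
    apply/orP; left; apply/eqP/setP => y; rewrite !inE /er xS /= orbF.
    by case: eqP => [->|]; rewrite ?andbF ?xE.
  have [tE _ ne] := V3 _ xE xS.
  apply/orP; right; rewrite (eq_sym x (te x)) ne andbT; apply/eqP/setP => y.
  rewrite !inE /er xS /=.
  by case: eqP => [->|_]; case: eqP => [->|]; rewrite ?andbF ?xE ?tE.
Qed.

Lemma mem_Lbb X i : (i \in Lbb q X) = (i < q) && (uV i \in SS X).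
Proof. by rewrite !inE. Qed.

Lemma mem_te_imset (B : {set edge p}) e : B \subset FV p -> e \in FV p ->
  (e \in te @: B) = (te e \in B).
Proof.
move=> sB eF; apply/imsetP/idP => [[f fB ->]|teB].
  by rewrite te_invol // (subsetP sB _ fB).
by exists (te e) => //; rewrite te_invol.
Qed.

Lemma mem_Ebb X e : is_pdCG tau X -> (e \in Ebb tau X) =
  [&& uE e \in SS X, e \in FL tau, uE (te e) \in SS X, te e \in FR tau & uA e \in SS X].
Proof.
move=> HX; rewrite /Ebb !inE /=.
case eE: (e \in Eset X) => //=.
have eF := Eset_FV HX eE.
rewrite mem_te_imset //; last first.
  by apply/subsetP => f; rewrite inE => /andP[/(Eset_FV HX)].
by rewrite !inE -!andbA.
Qed.

Lemma tauL i : (tau i < q) = ~~ (i < q).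
Proof.
case: (boolP (i < q)) => iq /=.
  have : tau i \in tau @: Lset p q by apply: imset_f; rewrite inE.
  by rewrite tau_LR !inE => /negbTE.
have : i \in Rset p q by rewrite !inE.
rewrite -tau_LR => /imsetP[k]; rewrite inE => kq ->.
by rewrite tau_invol.
Qed.

Lemma FL_FR e : e \in FL tau -> te e \in FR tau.
Proof.
move=> h; have eF : e \in FV p by move: h; rewrite inE => /andP[].
rewrite inE te_FV //=; move: h; case: e eF => a b; rewrite !inE /= => ab /andP[_ atb].
have La := tauL a; have Lb := tauL b.
rewrite /tau_e; case: (ltnP (tau a) (tau b)) => h /=; rewrite tau_invol //.
move: La Lb; case: (ltnP a q) => aq /= La; case: (ltnP b q) => bq /= Lb; lia.
Qed.

Lemma FR_FL e : e \in FR tau -> te e \in FL tau.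
Proof.
move=> h; have eF : e \in FV p by move: h; rewrite inE => /andP[].
rewrite inE te_FV //=; move: h; case: e eF => a b; rewrite !inE /= => ab /andP[_ atb].
rewrite /tau_e; case: (ltnP (tau a) (tau b)) => h /=; rewrite tau_invol //; lia.
Qed.

Lemma trich e : e \in FV p -> te e != e -> (e \in FL tau) || (e \in FR tau).
Proof.
case: e => a b; rewrite !inE /= => ab ne; rewrite ab /=.
case: (ltngtP a (tau b)) => // h.
move: ne; rewrite /tau_e /=.
have tb : tau b = a by apply: val_inj; rewrite /= -h.
have ta : tau a = b by rewrite -tb tau_invol.
by rewrite ta tb ltnNge (ltnW ab) /= eqxx.
Qed.

Definition LbS (S : {set U}) (i : 'I_p) := (i < q) && (uV i \in S).
Definition EbS (S : {set U}) (e : edge p) :=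
  [&& uE e \in S, e \in FL tau, uE (te e) \in S, te e \in FR tau & uA e \in S].

Lemma recV S i : validS S -> (uV i \in S) = if i < q then LbS S i else LbS S (tau i).
Proof.
case=> V1 _ _ _ _; case: ifP => iq; rewrite /LbS ?iq //.
by rewrite tauL iq /= V1.
Qed.

Lemma recA S e : validS S -> (uA e \in S) =
  (uE e \in S) && [|| uE (te e) \notin S, te e == e, EbS S e | EbS S (te e)].
Proof.
case=> V1 V2 V3 V4 V5; case eA: (uA e \in S).
  have eE := V2 _ eA; rewrite eE /=.
  case tE: (uE (te e) \in S) => //=.
  case: eqP => //= /eqP ne.
  have eF := V5 _ eE.
  case/orP: (trich eF ne) => h.
    by apply/esym/orP; left; rewrite /EbS eE h tE (FL_FR h) eA.
  apply/esym/orP; right; rewrite /EbS tE (FR_FL h) (te_invol eF) eE h /=.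
  exact: V4.
case eE: (uE e \in S) => //=.
have [tE tA ne] := V3 _ eE (negbT eA).
by rewrite tE (negbTE ne) /EbS eA (negbTE tA) !andbF.
Qed.

Lemma S_eq_T S1 S2 : validS S1 -> validS S2 ->
  (forall e, (uE e \in S1) = (uE e \in S2)) -> LbS S1 =1 LbS S2 -> EbS S1 =1 EbS S2 ->
  S1 = S2.
Proof.
move=> v1 v2 HE HL HB; apply/setP => -[i|[e|e]].
- by rewrite (recV _ v1) (recV _ v2); case: ifP.
- exact: HE.
- by rewrite (recA _ v1) (recA _ v2) !HE !HB.
Qed.


Lemma eqVV i j : (uV i == uV j) = (i == j). Proof. by []. Qed.
Lemma eqEE e f : (uE e == uE f) = (e == f). Proof. by []. Qed.
Lemma eqAA e f : (uA e == uA f) = (e == f). Proof. by []. Qed.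

Lemma setD2C (X : {set U}) a b : X :\ a :\ b = X :\ b :\ a.
Proof. by apply/setP => w; rewrite !inE; case: (w == a); case: (w == b). Qed.

Lemma te_inj e f : e \in FV p -> f \in FV p -> te e = te f -> e = f.
Proof. by move=> eF fF h; rewrite -(te_invol eF) h te_invol. Qed.

Lemma rmV X i : validS X -> validS (X :\ uV i :\ uV (tau i)).
Proof.
case=> V1 V2 V3 V4 V5; split.
- move=> j; rewrite !inE /= !eqVV V1 (inj_eq (can_inj tau_invol)).
  rewrite (can2_eq tau_invol tau_invol).
  by case: (j == i); case: (j == tau i).
- by move=> e; rewrite !inE /=; apply: V2.
- by move=> e; rewrite !inE /=; apply: V3.
- by move=> e; rewrite !inE /=; apply: V4.
- by move=> e h; apply: V5; move: h; rewrite !inE.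
Qed.

Lemma rmEA X e : validS X -> uA e \in X -> validS (X :\ uE e :\ uA e).
Proof.
case=> V1 V2 V3 V4 V5 eA; split.
- by move=> j; rewrite !inE /= V1.
- move=> f; rewrite !inE /= !eqAA !eqEE => /andP[-> /V2 ->]; by rewrite andbT.
- move=> f; rewrite !inE /= !eqAA !eqEE => /andP[fe fE]; rewrite fe /= => fA.
  have [tE tA ne] := V3 _ fE fA.
  rewrite tE (negbTE tA) ne andbF andbT; split => //.
  by apply: contraNneq tA => ->.
- move=> f; rewrite !inE /= !eqAA !eqEE => /andP[fe fE] /andP[tfe tE] /andP[_ fA].
  by rewrite tfe (V4 _ fE tE fA).
- by move=> f h; apply: V5; move: h; rewrite !inE /= => /andP[].
Qed.

Lemma rmEE X e : validS X -> uE e \in X -> uA e \notin X ->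
  validS (X :\ uE e :\ uE (te e)).
Proof.
case=> V1 V2 V3 V4 V5 eE eA.
have [tE tA ne] := V3 _ eE eA.
have eF := V5 _ eE.
split.
- by move=> j; rewrite !inE /= V1.
- move=> f; rewrite !inE /= !eqEE => fA; rewrite (V2 _ fA) andbT.
  apply/andP; split; [apply: contraNneq tA | apply: contraNneq eA]; by move=> <-.
- move=> f; rewrite !inE /= !eqEE => /and3P[f1 f2 fE] fA.
  have [tfE tfA tne] := V3 _ fE fA.
  have fF := V5 _ fE.
  rewrite tfE tfA tne andbT; split => //; apply/andP; split.
    by apply: contra f2 => /eqP/(te_inj fF eF) ->.
  by apply: contra f1 => /eqP h; rewrite -(te_invol fF) h.
- by move=> f; rewrite !inE /= => /and3P[_ _ fE] /and3P[_ _ tE'] fA; apply: V4.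
- by move=> f h; apply: V5; move: h; rewrite !inE /= => /and3P[].
Qed.

Lemma rmAA X e : validS X -> uE e \in X -> uA e \in X -> uE (te e) \in X -> te e != e ->
  validS (X :\ uA e :\ uA (te e)).
Proof.
case=> V1 V2 V3 V4 V5 eE eA tE ne.
have eF := V5 _ eE.
split.
- by move=> j; rewrite !inE /= V1.
- by move=> f; rewrite !inE /= => /and3P[_ _ /V2].
- move=> f; rewrite !inE /= !eqAA => fE.
  case fA: (uA f \in X); last first.
    have [tfE tfA tne] := V3 _ fE (negbT fA).
    by rewrite tfE (negbTE tfA) !andbF.
  rewrite andbT negb_and !negbK => /orP[/eqP fte|/eqP fe]; subst f.
    by rewrite te_invol // eE eqxx /= (eq_sym e) ne.
  by rewrite tE eqxx /=; split.
- move=> f; rewrite !inE /= !eqAA => fE tfE /and3P[f1 f2 fA].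
  have fF := V5 _ fE.
  rewrite (V4 _ fE tfE fA) andbT; apply/andP; split.
    by apply: contra f2 => /eqP/(te_inj fF eF) ->.
  by apply: contra f1 => /eqP h; rewrite -(te_invol fF) h.
- by move=> f h; apply: V5; move: h; rewrite !inE.
Qed.

Lemma partner (X Y : {set U}) u : validS X -> validS Y -> Y \subset X ->
  u \in X -> u \notin Y ->
  exists u', [/\ u' != u, u' \in X, u' \notin Y & validS (X :\ u :\ u')].
Proof.
move=> vX vY /subsetP sYX uX uY.
have [V1 V2 V3 V4 V5] := vX; have [W1 W2 W3 W4 W5] := vY.
case: u uX uY => [i|[e|e]] uX uY.
- exists (uV (tau i)); split => //.
  + by rewrite eqVV tau_nofix.
  + by rewrite -V1.
  + by rewrite -W1.
  + exact: rmV.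
- case eA: (uA e \in X).
    exists (uA e); split => //; last exact: rmEA.
    by apply: contra uY; apply: W2.
  have [tE tA ne] := V3 _ uX (negbT eA).
  exists (uE (te e)); split => //; last exact: rmEE (negbT eA).
  apply/negP => tY.
  have tAY : uA (te e) \notin Y by apply: contra tA; apply: sYX.
  have [h _ _] := W3 _ tY tAY.
  by rewrite te_invol ?(V5 _ uX) // (negbTE uY) in h.
- have eE := V2 _ uX.
  case eY: (uE e \in Y).
    have [tY tA ne] := W3 _ eY uY.
    exists (uA (te e)); split => //.
    + by apply: V4 => //; apply: sYX.
    + by apply: rmAA => //; apply: sYX.
  exists (uE e); split => //; first by rewrite eY.
  by rewrite setD2C; apply: rmEA.
Qed.

Lemma diff2 (X : {set U}) a b w : a \in X -> b \in X ->
  (w \in X) && (w \notin X :\ a :\ b) = (w == a) || (w == b).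
Proof.
move=> aX bX; rewrite !inE.
have [->|na] := eqVneq w a; first by rewrite aX /= ?andbF.
have [->|nb] := eqVneq w b; first by rewrite bX /= ?andbF ?orbT.
by case: (w \in X).
Qed.

Lemma same_diff (SG SF SF' : {set U}) : SF \subset SG -> SF' \subset SG ->
  (forall w, (w \in SG) && (w \notin SF) = (w \in SG) && (w \notin SF')) -> SF = SF'.
Proof.
move=> /subsetP s1 /subsetP s2 h; apply/setP => w.
apply/idP/idP => h1.
  by have wG := s1 _ h1; move: (h w); rewrite wG h1 /= => /esym/negbFE.
by have wG := s2 _ h1; move: (h w); rewrite wG h1 /= => /negbFE.
Qed.

Lemma two_in_diff (D : pred U) a b u v :
  (forall w, D w = (w == a) || (w == b)) -> D u -> D v -> u != v ->
  forall w, D w = (w == u) || (w == v).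
Proof.
move=> h; rewrite !h => /orP[/eqP->|/eqP->] /orP[/eqP->|/eqP->];
  rewrite ?eqxx // => _ w; by rewrite h // orbC.
Qed.

Lemma three_in_two (a b x y z : U) : x != y -> x != z -> y != z ->
  (x == a) || (x == b) -> (y == a) || (y == b) -> (z == a) || (z == b) -> False.
Proof.
move=> nxy nxz nyz /orP[/eqP ?|/eqP ?] /orP[/eqP ?|/eqP ?] /orP[/eqP ?|/eqP ?];
  subst; by rewrite ?eqxx in nxy nxz nyz.
Qed.


Section Main.
Variable G : CG p.
Variable A : CG p -> Prop.
Hypothesis HG : is_pdCG tau G.
Hypothesis HA : forall F, A F -> is_pdCG tau F.
Hypothesis Hinc : t_incomparable q tau A.
Hypothesis Hcov : forall F, A F -> covered tau F G.

Local Notation D X := (fun w => (w \in SS G) && (w \notin SS X)).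

Lemma subG F : A F -> SS F \subset SS G.
Proof. by move=> AF; have [[le _] _] := Hcov AF; apply/(le_sS (HA AF) HG). Qed.

Lemma PC F : A F -> exists a b, a != b /\ forall w, D F w = (w == a) || (w == b).
Proof.
move=> AF; have HF := HA AF.
have [[le ne] nomid] := Hcov AF.
have sub := subG AF.
have : ~~ (SS G \subset SS F).
  apply/negP => h; apply: ne; apply: SS_inj HF HG _.
  by apply/eqP; rewrite eqEsubset sub h.
case/subsetPn => u uG uF.
have [u' [nu u'G u'F vZ]] := partner (pdCG_valid HG) (pdCG_valid HF) sub uG uF.
have [K [HK SK]] := build vZ.
have FK : SS F \subset SS K.
  rewrite SK; apply/subsetP => w wF; rewrite !in_setD1 (subsetP sub _ wF) andbT.
  apply/andP; split; [apply: contraNneq u'F | apply: contraNneq uF]; by move=> <-.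
have KG : SS K \subset SS G.
  by rewrite SK; apply/subsetP => w; rewrite !inE => /and3P[_ _ ->].
have KF : K = F.
  case: (eqVneq K F) => // nKF; exfalso; apply: nomid; exists K; split => //.
  split; split.
  - exact/(le_sS HF HK).
  - by move=> E; rewrite E eqxx in nKF.
  - exact/(le_sS HK HG).
  - move=> E; move: uG; rewrite -E SK !inE eqxx /=.
    by rewrite andbF.
exists u, u'; split; first by rewrite eq_sym.
by move=> w; rewrite -KF SK diff2.
Qed.

Lemma cover_eq F F' u v : A F -> A F' -> u != v -> D F u -> D F v -> D F' u -> D F' v -> F = F'.
Proof.
move=> AF AF' nuv h1 h2 h3 h4.
have [a [b [_ hab]]] := PC AF.
have [a' [b' [_ hab']]] := PC AF'.
have e1 := two_in_diff hab h1 h2 nuv.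
have e2 := two_in_diff hab' h3 h4 nuv.
apply: SS_inj (HA AF) (HA AF') _.
apply: (same_diff (subG AF) (subG AF')) => w.
by rewrite e1 e2.
Qed.

Lemma TCMP F F' e : A F -> A F' -> uA e \in SS G -> uE e \in SS F -> uA e \notin SS F ->
  uE e \notin SS F' -> le_t q tau F' F.
Proof.
move=> AF AF' AG EF nAF nEF'.
have HF := HA AF; have HF' := HA AF'.
have [V1 V2 V3 V4 V5] := pdCG_valid HF.
have [G1 G2 G3 G4 G5] := pdCG_valid HG.
have sF := subsetP (subG AF); have sF' := subsetP (subG AF').
have [tE tA ne] := V3 _ EF nAF.
have eFV := V5 _ EF.
have tAG : uA (te e) \in SS G by apply: G4 => //; apply: sF.
have [a [b [_ hab]]] := PC AF.
have hD : forall w, D F w = (w == uA e) || (w == uA (te e)).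
  apply: (two_in_diff hab); rewrite /= ?AG ?nAF ?tAG ?tA //.
  by rewrite eqAA eq_sym.
have help : forall w, w \in SS F' -> w != uA e -> w != uA (te e) -> w \in SS F.
  move=> w wF n1 n2; move: (hD w); rewrite (sF' _ wF) (negbTE n1) (negbTE n2) /=.
  by move/negbFE.
split.
- apply/subsetP => f; rewrite -!SSE => h; exact: help.
- apply/subsetP => i; rewrite !mem_Lbb => /andP[-> h] /=; exact: help.
- apply/subsetP => f; rewrite !mem_Ebb // => /and5P[h1 h2 h3 h4 h5].
  have fe : f != e by apply: contraNneq nEF' => <-.
  have fte : f != te e.
    by apply: contraNneq nEF' => E; move: h3; rewrite E te_invol.
  apply/and5P; split => //; try exact: help.
Qed.

Lemma OV F F' u : A F -> A F' -> F <> F' -> u \in SS G -> u \notin SS F -> u \in SS F'.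
Proof.
move=> AF AF' nFF' uG uF; apply: contraT => uF'.
have HF := HA AF; have HF' := HA AF'.
have [V1 V2 V3 V4 V5] := pdCG_valid HF.
have [W1 W2 W3 W4 W5] := pdCG_valid HF'.
have [G1 G2 G3 G4 G5] := pdCG_valid HG.
have sF := subsetP (subG AF); have sF' := subsetP (subG AF').
have cw : forall w, w != u -> w \in SS G -> w \notin SS F -> w \notin SS F' -> false.
  move=> w nwu wG wF wF'; case: nFF'.
  by apply: (cover_eq AF AF' (u := u) (v := w)); rewrite 1?eq_sym //= ?uG ?uF ?uF' ?wG ?wF ?wF'.
case: u uG uF uF' cw => [i|[e|e]] uG uF uF' cw.
- apply: (cw (uV (tau i))); rewrite -?G1 -?V1 -?W1 //.
  by rewrite eqVV tau_nofix.
- case AG: (uA e \in SS G).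
    by apply: (cw (uA e)) => //; [apply: contra uF; apply: V2 | apply: contra uF'; apply: W2].
  have [tE tA ne] := G3 _ uG (negbT AG).
  have eFV := G5 _ uG.
  apply: (cw (uE (te e))) => //.
    apply/negP => h; have tAF : uA (te e) \notin SS F by apply: contra tA; apply: sF.
    by have [] := V3 _ h tAF; rewrite te_invol // (negbTE uF).
  apply/negP => h; have tAF : uA (te e) \notin SS F' by apply: contra tA; apply: sF'.
  by have [] := W3 _ h tAF; rewrite te_invol // (negbTE uF').
- have EG := G2 _ uG.
  case: (boolP (uE e \in SS F)) => eF; case: (boolP (uE e \in SS F')) => eF'.
  + have [tE tA ne] := V3 _ eF uF.
    have [_ tA' _] := W3 _ eF' uF'.
    apply: (cw (uA (te e))) => //.
    by apply: G4 => //; apply: sF.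
  + by exfalso; apply: (Hinc AF' AF) => //; [move=> E; apply: nFF' | apply: (TCMP AF AF' uG)].
  + by exfalso; apply: (Hinc AF AF') => //; apply: (TCMP AF' AF uG).
  + by apply: (cw (uE e)).
Qed.


Lemma K1aux F H e : A F -> A H -> F <> H -> uE e \in SS F -> uE e \in SS H ->
  uA e \notin SS F -> uE (te e) \in SS H.
Proof.
move=> AF AH nFH eF eH nAF; apply: contraT => tH.
have [V1 V2 V3 V4 V5] := pdCG_valid (HA AF).
have [W1 W2 W3 W4 W5] := pdCG_valid (HA AH).
have [G1 G2 G3 G4 G5] := pdCG_valid HG.
have sF := subsetP (subG AF); have sH := subsetP (subG AH).
have AeH : uA e \in SS H.
  by apply: contraT => nA; have [] := W3 _ eH nA; rewrite (negbTE tH).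
have [tE tA ne] := V3 _ eF nAF.
have tAG : uA (te e) \in SS G by apply: G4; [apply: sF | apply: sF | apply: sH].
have := OV AF AH nFH tAG tA.
by move/W2; rewrite (negbTE tH).
Qed.

Lemma K1 F H : A F -> A H -> F <> H -> validS (SS F :&: SS H).
Proof.
move=> AF AH nFH.
have [V1 V2 V3 V4 V5] := pdCG_valid (HA AF).
have [W1 W2 W3 W4 W5] := pdCG_valid (HA AH).
split.
- by move=> i; rewrite !in_setI V1 W1.
- by move=> e; rewrite !in_setI => /andP[/V2 -> /W2 ->].
- move=> e; rewrite !in_setI => /andP[eF eH]; rewrite negb_and => /orP[nA|nA].
    have [tE tA ne] := V3 _ eF nA.
    by rewrite tE (negbTE tA) (K1aux AF AH nFH eF eH nA).
  have [tE tA ne] := W3 _ eH nA.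
  by rewrite tE (negbTE tA) andbF (K1aux AH AF (nesym nFH) eH eF nA).
- by move=> e; rewrite !in_setI => /andP[? ?] /andP[? ?] /andP[? ?]; rewrite V4 ?W4.
- by move=> e; rewrite in_setI => /andP[/V5].
Qed.

Lemma meet_t_SS F H M : A F -> A H -> F <> H -> is_meet_t q tau F H M ->
  SS M = SS F :&: SS H.
Proof.
move=> AF AH nFH [HM EM LM BM].
have HF := HA AF; have HH := HA AH.
apply: S_eq_T (pdCG_valid HM) (K1 AF AH nFH) _ _ _.
- by move=> e; rewrite in_setI !SSE EM in_setI.
- move=> i; rewrite /LbS -[(i < q) && _]mem_Lbb LM in_setI !mem_Lbb in_setI.
  by case: (i < q).
- move=> e; rewrite /EbS -[[&& _, _, _, _ & _]](mem_Ebb e HM) BM in_setI !mem_Ebb //.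
  by rewrite !in_setI; do ![case: (_ \in _) => //=].
Qed.

Lemma meet_t_of_SS F H M : is_pdCG tau F -> is_pdCG tau H -> is_pdCG tau M ->
  SS M = SS F :&: SS H -> is_meet_t q tau F H M.
Proof.
move=> HF HH HM E; split => //.
- by apply/setP => e; rewrite in_setI -!SSE E in_setI.
- by apply/setP => i; rewrite in_setI !mem_Lbb E in_setI; case: (i < q).
- apply/setP => e; rewrite in_setI !mem_Ebb // E.
  by rewrite !in_setI; do ![case: (_ \in _) => //=].
Qed.


Lemma main H : A H ->
  [/\ (forall M, meets_s tau A H M <-> meets_t q tau A H M),
      t_incomparable q tau (meets_t q tau A H)
    & forall F, meets_t q tau A H F -> covered tau F H].
Proof.
move=> AH; have HH := HA AH.
have [G1 G2 G3 G4 G5] := pdCG_valid HG.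
split.
- move=> M; split.
    case=> F [AF nFH [HM leMF leMH univ]]; exists F; split => //.
    have HF := HA AF.
    have [K [HK SK]] := build (K1 AF AH nFH).
    have KM : le_s K M.
      apply: univ => //; apply/(le_sS HK); rewrite ?SK ?subsetIl ?subsetIr //.
    apply: meet_t_of_SS => //.
    apply/eqP; rewrite eqEsubset; apply/andP; split.
      by rewrite subsetI; apply/andP; split; apply/(le_sS HM).
    by rewrite -SK; apply/(le_sS HK HM).
  case=> F [AF nFH Hm]; exists F; split => //.
  have HF := HA AF.
  have SM := meet_t_SS AF AH nFH Hm.
  have HM : is_pdCG tau M by case: Hm.
  split => //.
  + by apply/(le_sS HM HF); rewrite SM subsetIl.
  + by apply/(le_sS HM HH); rewrite SM subsetIr.
  + move=> K HK kF kH; apply/(le_sS HK HM); rewrite SM subsetI.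
    by apply/andP; split; [apply/(le_sS HK HF) | apply/(le_sS HK HH)].
- move=> M1 M2 [F1 [AF1 n1 m1]] [F2 [AF2 n2 m2]] nM leM.
  have S1 := meet_t_SS AF1 AH n1 m1.
  have S2 := meet_t_SS AF2 AH n2 m2.
  have HM1 : is_pdCG tau M1 by case: m1.
  have HM2 : is_pdCG tau M2 by case: m2.
  have nF : F1 <> F2.
    by move=> E; subst; apply: nM; apply: SS_inj => //; rewrite S1 S2.
  have [V1 V2 V3 V4 V5] := pdCG_valid (HA AF2).
  have sF2 := subsetP (subG AF2).
  have [a [b [nab hab]]] := PC AF2.
  have aD : D F2 a by rewrite hab eqxx.
  have helper : forall w, D F2 w -> w \in SS M1.
    move=> w /andP[wG wF]; rewrite S1 in_setI.
    by rewrite (OV AF2 AF1 (nesym nF) wG wF) (OV AF2 AH n2 wG wF).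
  have notM2 : forall w, D F2 w -> w \notin SS M2.
    by move=> w /andP[_ wF]; rewrite S2 in_setI negb_and wF.
  case: leM => sE sL sB.
  have Ecase : forall e, D F2 (uE e) -> False.
    move=> e h; have := helper _ h; rewrite SSE => /(subsetP sE); rewrite -SSE.
    by move/negP: (notM2 _ h).
  move: aD; case: a {nab hab} => [i|[e|e]] aD.
  + pose j := if i < q then i else tau i.
    have jq : j < q by rewrite /j; case: ifP => // /negbT; rewrite tauL.
    have Dj : D F2 (uV j) by rewrite /j; case: ifP => _ //; rewrite -G1 -V1.
    have := helper _ Dj => h1.
    have : j \in Lbb q M1 by rewrite mem_Lbb jq.
    move/(subsetP sL); rewrite mem_Lbb => /andP[_ h2].
    by move/negP: (notM2 _ Dj).
  + exact: (Ecase e).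
  + move: aD => /andP[AG AF2n].
    have EG := G2 _ AG.
    case: (boolP (uE e \in SS F2)) => EF2; last by apply: (Ecase e); rewrite /= EG.
    have [tE tA ne] := V3 _ EF2 AF2n.
    have tAG : uA (te e) \in SS G by apply: G4 => //; apply: sF2.
    have eFV := G5 _ EG.
    have [r [D1 D2 rL rR]] : exists r, [/\ D F2 (uA r), D F2 (uA (te r)),
        r \in FL tau & te r \in FR tau].
      case/orP: (trich eFV ne) => h.
        by exists e; rewrite /= AG AF2n tAG tA h (FL_FR h).
      exists (te e); rewrite /= te_invol // AG AF2n tAG tA h.
      by split => //; apply: FR_FL.
    have [W1 W2 W3 W4 W5] := pdCG_valid HM1.
    have A1 := helper _ D1; have A2 := helper _ D2.
    have : r \in Ebb tau M1 by rewrite mem_Ebb // rL rR A1 (W2 _ A1) (W2 _ A2).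
    move/(subsetP sB); rewrite mem_Ebb // => /and5P[_ _ _ _ h].
    by move/negP: (notM2 _ D1).
- move=> M [F [AF nFH m]].
  have SM := meet_t_SS AF AH nFH m.
  have HM : is_pdCG tau M by case: m.
  have [a [b [nab hab]]] := PC AF.
  have aD : D F a by rewrite hab eqxx.
  have bD : D F b by rewrite hab eqxx orbT.
  have aH : a \in SS H by case/andP: aD => aG aF; apply: (OV AF AH nFH aG aF).
  have bH : b \in SS H by case/andP: bD => bG bF; apply: (OV AF AH nFH bG bF).
  have hDM : forall w, (w \in SS H) && (w \notin SS M) = (w == a) || (w == b).
    move=> w; rewrite SM in_setI.
    case wH: (w \in SS H) => /=; last first.
      apply/esym/negbTE; apply/negP => /orP[/eqP E|/eqP E]; subst;
        by rewrite ?aH ?bH in wH.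
    by rewrite andbT -hab (subsetP (subG AH) _ wH).
  split.
    split; first by apply/(le_sS HM HH); rewrite SM subsetIr.
    by move=> E; have := hDM a; rewrite eqxx /= E aH.
  case=> J [HJ [[leMJ nMJ] [leJH nJH]]].
  have sMJ := (le_sS HM HJ).1 leMJ.
  have sJH := (le_sS HJ HH).1 leJH.
  have : ~~ (SS H \subset SS J).
    apply/negP => h; apply: nJH; apply: SS_inj => //.
    by apply/eqP; rewrite eqEsubset sJH h.
  case/subsetPn => v vH vJ.
  have [v' [nv v'H v'J _]] := partner (pdCG_valid HH) (pdCG_valid HJ) sJH vH vJ.
  have : ~~ (SS J \subset SS M).
    apply/negP => h; apply: nMJ; apply: SS_inj => //.
    by apply/eqP; rewrite eqEsubset sMJ h.
  case/subsetPn => w wJ wM.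
  apply: (three_in_two (a := a) (b := b) (x := v) (y := v') (z := w)).
  + by rewrite eq_sym.
  + by apply: contraNneq vJ => ->.
  + by apply: contraNneq v'J => ->.
  + rewrite -hDM vH /=; apply: contra vJ; exact: (subsetP sMJ).
  + rewrite -hDM v'H /=; apply: contra v'J; exact: (subsetP sMJ).
  + by rewrite -hDM (subsetP sJH _ wJ) wM.
Qed.

End Main.

End Infra.

Theorem corollary11 (p q : nat) (tau : 'I_p -> 'I_p)
  (tau_invol : involutive tau) (tau_nofix : forall i, tau i != i)
  (tau_LR : tau @: Lset p q = Rset p q)
  (G : CG p) (A : CG p -> Prop)
  (HG : is_pdCG tau G)
  (HA : forall F, A F -> is_pdCG tau F)
  (Hinc : t_incomparable q tau A)
  (Hcov : forall F, A F -> covered tau F G) :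
  forall H, A H ->
    [/\ (forall M, meets_s tau A H M <-> meets_t q tau A H M),
        t_incomparable q tau (meets_t q tau A H)
      & forall F, meets_t q tau A H F -> covered tau F H].
Proof.
move=> H AH; exact: (main tau_invol tau_nofix tau_LR HG HA Hinc Hcov AH).
Qed.
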